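(* Let $N\ge3$ and let $G$ be the graph on vertices $\{u_{1j},b_{1j},u_{2j}: j\in[N]\}$ with edges $u_{1j}\sim u_{1k}$ and $u_{2j}\sim u_{2k}$ for $j\ne k$, $b_{1j}\sim u_{1k}$ for all $j,k$, and $u_{1j}\sim u_{2j}$, $u_{2j}\sim b_{1j}$ for all $j$. For $U\subseteq[N]$ with $2\le|U|\le N-1$, $m\in[N]\setminus U$ and $U\subseteq V\subseteq[N]$, let $\mathbf v(m,U,V)$ be the weight vector with $u_{1m}=|U|^{-1}$, $b_{1j}=1-|U|^{-1}$ for $j\in V$, $u_{2j}=|U|^{-1}$ for $j\in U$, and all other coordinates $0$. Then the fractional weighted chromatic number of $G$ with weight vector $\mathbf v(m,U,V)$ is at most $1+|U|^{-1}-|U|^{-2}$, and hence at most $1.25$.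
   Context: The fractional weighted chromatic number of a graph with weights $w\ge0$ on vertices is $\min\sum_i\lambda_i$ over nonnegative reals $\lambda_i$ and stable sets $S_i$ with $\sum_i\lambda_i\chi^{S_i}=w$, where $\chi^S$ is the incidence vector of $S$. *)

(* Defs.v *)
From HB Require Import structures.
From mathcomp Require Import all_boot all_order all_algebra.
From mathcomp Require Import classical_sets reals.
Set Implicit Arguments. Unset Strict Implicit. Unset Printing Implicit Defensive.
Import Order.TTheory GRing.Theory Num.Theory.
Local Open Scope ring_scope.
Local Open Scope classical_set_scope.

(* Vertices (k, j) : 'I_3 * 'I_N with k = 0 for u_{1j}, k = 1 for b_{1j},
   k = 2 for u_{2j}. *)
Definition vtx (N : nat) := ('I_3 * 'I_N)%type.

Definition edge0 (N : nat) (x y : vtx N) : bool :=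
  let: (kx, jx) := x in let: (ky, jy) := y in
  [|| [&& (kx == 0 :> nat), (ky == 0 :> nat) & jx != jy],
      [&& (kx == 2 :> nat), (ky == 2 :> nat) & jx != jy],
      (kx == 1 :> nat) && (ky == 0 :> nat),
      [&& (kx == 0 :> nat), (ky == 2 :> nat) & jx == jy]
    | [&& (kx == 2 :> nat), (ky == 1 :> nat) & jx == jy]].

Definition adjG (N : nat) (x y : vtx N) : bool := edge0 x y || edge0 y x.

Definition stable (N : nat) (S : {set vtx N}) : bool :=
  [forall x in S, forall y in S, ~~ adjG x y].

Definition fwcn (R : realType) (N : nat) (w : vtx N -> R) : R :=
  inf [set t : R | exists lam : {set vtx N} -> R,
         (forall S, 0 <= lam S) /\
         (forall x, \sum_(S : {set vtx N} | stable S) lam S * (x \in S)%:R = w x) /\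
         t = \sum_(S : {set vtx N} | stable S) lam S].

Definition wvec (R : realType) (N : nat) (m : 'I_N) (U V : {set 'I_N})
  (x : vtx N) : R :=
  let: (k, j) := x in
  if (k == 0 :> nat) then (if j == m then (#|U|%:R)^-1 else 0)
  else if (k == 1 :> nat) then (if j \in V then 1 - (#|U|%:R)^-1 else 0)
  else (if j \in U then (#|U|%:R)^-1 else 0).

(* Main.v *)
Require Import Defs.
From HB Require Import structures.
From mathcomp Require Import all_boot all_order all_algebra.
From mathcomp Require Import classical_sets reals.
From mathcomp Require Import lra.
Import Order.TTheory GRing.Theory Num.Theory.
Local Open Scope ring_scope.

Section Aux.
Variable (R : realType) (N : nat) (m : 'I_N) (U V : {set 'I_N}).

Definition As (j : 'I_N) : {set vtx N} :=
  [set x : vtx N | (((x.1 : nat) == 0%N) && (x.2 == m)) || (((x.1 : nat) == 2%N) && (x.2 == j))].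
Definition Cs (j : 'I_N) : {set vtx N} :=
  [set x : vtx N | (((x.1 : nat) == 2%N) && (x.2 == j)) || [&& ((x.1 : nat) == 1%N), (x.2 \in V) & (x.2 != j)]].
Definition Bs : {set vtx N} := [set x : vtx N | ((x.1 : nat) == 1%N) && (x.2 \in U)].

Lemma stableAs j : j != m -> stable (As j).
Proof.
move=> jm; apply/forallP => x; apply/implyP; rewrite inE => Hx.
apply/forallP => y; apply/implyP; rewrite inE => Hy.
move: x y Hx Hy => [[[|[|[|k]]] hk] jx] [[[|[|[|k']]] hk'] jy] //=;
 rewrite /adjG /edge0 /= ?andbF ?orbF //=.
all: by move=> /eqP -> /eqP ->; rewrite ?eqxx //= ?(eq_sym m j) ?jm ?(negbTE jm).
Qed.

Lemma stableCs j : stable (Cs j).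
Proof.
apply/forallP => x; apply/implyP; rewrite inE => Hx.
apply/forallP => y; apply/implyP; rewrite inE => Hy.
move: x y Hx Hy => [[[|[|[|k]]] hk] jx] [[[|[|[|k']]] hk'] jy] //=;
 rewrite /adjG /edge0 /= ?andbF ?orbF //=.
all: try (move=> /andP[_ h] /eqP ->); try (move=> /eqP -> /andP[_ h]); try (move=> /eqP -> /eqP ->).
all: by rewrite ?eqxx // eq_sym.
Qed.


Lemma stableBs : stable Bs.
Proof.
apply/forallP => x; apply/implyP; rewrite inE => Hx.
apply/forallP => y; apply/implyP; rewrite inE => Hy.
move: x y Hx Hy => [[[|[|[|k]]] hk] jx] [[[|[|[|k']]] hk'] jy] //=.
Qed.


Variable a : R.
Definition lam (S : {set vtx N}) : R :=
  \sum_(j in U) (a^+2 * (S == As j)%:R + (a - a^+2) * (S == Cs j)%:R)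
  + (a - a^+2) * (S == Bs)%:R.

Lemma sum_ind (T : {set vtx N}) (f : {set vtx N} -> R) : stable T ->
  \sum_(S | stable S) (S == T)%:R * f S = f T.
Proof.
move=> hT; rewrite (bigD1 T) //= eqxx mul1r big1 ?addr0 //.
by move=> S /andP[_ /negbTE ->]; rewrite mul0r.
Qed.

Lemma lam_sum (g : {set vtx N} -> R) : (forall j, j \in U -> j != m) ->
  \sum_(S | stable S) lam S * g S =
  \sum_(j in U) (a^+2 * g (As j) + (a - a^+2) * g (Cs j)) + (a - a^+2) * g (Bs).
Proof.
move=> hU; rewrite /lam.
under eq_bigr => S _ do rewrite mulrDl mulr_suml.
rewrite big_split /= exchange_big /=.
congr (_ + _).
- apply: eq_bigr => j jU.
  under eq_bigr => S _ do rewrite mulrDl -!mulrA.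
  rewrite big_split /= -!mulr_sumr !sum_ind ?mulrA -?expr2 //; first [exact: stableCs | exact: stableAs (hU j jU)].
- under eq_bigr => S _ do rewrite -mulrA.
  by rewrite -mulr_sumr sum_ind //; exact: stableBs.
Qed.

Lemma count_eq (j0 : 'I_N) : \sum_(j in U) ((j0 == j)%:R : R) = (j0 \in U)%:R.
Proof.
case: (boolP (j0 \in U)) => h.
  rewrite (bigD1 j0) //= eqxx big1 ?addr0 // => j /andP[_ hj].
  by rewrite eq_sym (negbTE hj).
by apply: big1 => j jU; case: eqP => // e; subst; rewrite jU in h.
Qed.

Lemma count_neq (j0 : 'I_N) : \sum_(j in U) ((j0 != j)%:R : R) = #|U|%:R - (j0 \in U)%:R.
Proof.
rewrite -count_eq -sumr_const -sumrB; apply: eq_bigr => j _.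
by case: (j0 == j); rewrite ?subrr ?subr0.
Qed.

End Aux.


Theorem theorem11 (R : realType) (N : nat) (m : 'I_N) (U V : {set 'I_N}) :
  (3 <= N)%N -> (2 <= #|U|)%N -> (#|U| <= N - 1)%N -> m \notin U ->
  U \subset V ->
  fwcn (wvec R m U V) <= 1 + (#|U|%:R)^-1 - (#|U|%:R)^-2 /\
  fwcn (wvec R m U V) <= 5%:R / 4%:R.
Proof.
move=> hN hU hUN hm hUV.
rewrite -exprVn.
set a : R := (#|U|%:R)^-1.
have u0 : (#|U|%:R : R) != 0 by rewrite pnatr_eq0 -lt0n (leq_trans _ hU).
have ua : a * #|U|%:R = 1 by rewrite mulVf.
have u2 : (2 : R) <= #|U|%:R by rewrite (ler_nat R 2).
have a0 : 0 <= a by rewrite invr_ge0 ler0n.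
have a1 : a <= 2^-1 by rewrite lef_pV2 ?posrE // (lt_le_trans _ u2).
have ha : 0 <= a - a^+2.
  by rewrite subr_ge0 expr2 ler_piMr //; apply: (le_trans a1); lra.
have jm : forall j, j \in U -> j != m.
  by move=> j jU; apply: contraNneq hm => <-.
have key : fwcn (wvec R m U V) <= 1 + a - a^+2.
  rewrite /fwcn; apply: ge_inf.
    exists 0 => y [lam0 [h0 [_ ->]]]; apply: sumr_ge0 => S _; exact: h0.
  exists (lam R N m U V a); split; [|split].
  - move=> S; rewrite /lam; apply: addr_ge0; last first.
      by apply: mulr_ge0.
    apply: sumr_ge0 => j _; apply: addr_ge0; apply: mulr_ge0 => //.
    exact: exprn_ge0.
  - move=> x; rewrite (lam_sum R N m U V a (fun S => (x \in S)%:R)) //.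
    case: x => [[[|[|[|k]]] hk] j0] //; under eq_bigr => j _ do rewrite /As /Cs !inE /= ?orbF ?andbF; rewrite /Bs !inE /= ?orbF ?andbF -/a.
    + rewrite !mulr0 !addr0 sumr_const.
      case: (j0 == m); last by rewrite mulr0 mul0rn.
      by rewrite mulr1 -mulr_natr expr2 -mulrA ua mulr1.
    + under eq_bigr => j _ do rewrite mulr0 add0r.
      case: (boolP (j0 \in V)) => hV /=.
        rewrite -mulr_sumr count_neq -mulrDr subrK mulrBl ua expr2 -mulrA ua mulr1.
        by [].
      have -> : (j0 \in U) = false.
        by apply/negbTE; apply: contraNN hV => /(fintype.subsetP hUV).
      by rewrite big1 ?add0r ?mulr0 // => j _; rewrite mulr0.
    + rewrite mulr0 addr0.
      under eq_bigr => j _ do rewrite -mulrDl (addrC (a^+2)) subrK.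
      by rewrite -mulr_sumr count_eq; case: (j0 \in U); rewrite ?mulr1 ?mulr0.
  - have := lam_sum R N m U V a (fun _ => 1) jm.
    under eq_bigr => S _ do rewrite mulr1.
    move=> ->; rewrite !mulr1.
    under eq_bigr => j _ do rewrite (addrC (a^+2)) subrK.
    rewrite sumr_const -mulr_natr ua; lra.
split=> //; apply: (le_trans key).
have := sqr_ge0 (a - 2^-1); rewrite expr2 => h.
rewrite expr2; nra.
Qed.
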